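(* Let $H$ be a separable Hilbert space, $(\Omega,\mathcal{A},\mu)$ a measure space, $f\in L^\infty_\mu(\Omega)$ real-valued with multiplication operator $M_f$ on $L^2_\mu(\Omega)$, and $V:H\to L^2_\mu(\Omega)$ an invertible bounded linear operator such that $A=V^{-1}M_fV$ is surjective. Let $\mathcal{F}(x):=-\frac12(Vx,M_fVx)_{L^2_\mu(\Omega)}$. Then $\mathcal{F}$ is $\tilde\lambda$-convex on the Hilbert space $H$, i.e. $\mathcal{F}((1-\theta)x_1+\theta x_2)\le(1-\theta)\mathcal{F}(x_1)+\theta\mathcal{F}(x_2)-\tilde\lambda\frac{\theta(1-\theta)}{2}\|x_1-x_2\|_H^2$ for all $x_1,x_2\in H$, $\theta\in[0,1]$, where $$\tilde\lambda:=-\operatorname*{ess\,sup}_{\omega\in\Omega}f(\omega)\,\tilde c_V,\qquad \tilde c_V:=\begin{cases}\|V\|^2,&\text{if }\operatorname*{ess\,sup}_\Omega f\ge0,\\ \|V^{-1}\|^{-2},&\text{otherwise},\end{cases}$$ with operator norms $\|V\|$ in $L(H,L^2_\mu(\Omega))$ and $\|V^{-1}\|$ in $L(L^2_\mu(\Omega),H)$.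
   Context: $M_f(\varphi)(\omega)=f(\omega)\varphi(\omega)$ for $\mu$-a.e. $\omega$. *)

(* Defs.v *)
From HB Require Import structures.
From mathcomp Require Import all_boot all_order all_algebra.
From mathcomp Require Import all_classical all_reals all_analysis.
From mathcomp Require Import ess_sup_inf hoelder.
Set Implicit Arguments. Unset Strict Implicit. Unset Printing Implicit Defensive.
Import Order.TTheory GRing.Theory Num.Theory.
Import numFieldNormedType.Exports.
Local Open Scope classical_set_scope.
Local Open Scope ring_scope.

Definition is_inner_product (R : realType) (H : normedModType R)
  (ip : H -> H -> R) : Prop :=
  [/\ (forall x y, ip x y = ip y x),
      (forall a x y z, ip (a *: x + y) z = a * ip x z + ip y z) &
      (forall x, ip x x = `|x| ^+ 2)].

Definition separable_space (T : topologicalType) : Prop :=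
  exists D : set T, countable D /\ closure D = setT.

Definition hilbert_space (R : realType) (H : completeNormedModType R) : Prop :=
  exists ip : H -> H -> R, is_inner_product ip.

Definition L2norm d (T : measurableType d) (R : realType)
  (mu : {measure set T -> \bar R}) (g : T -> R) : R :=
  fine ('N[mu]_(2%:E)[EFin \o g])%E.

Definition opnormV d (T : measurableType d) (R : realType)
  (mu : {measure set T -> \bar R}) (H : normedModType R) (V : H -> T -> R) : R :=
  sup [set L2norm mu (V x) | x in [set x : H | `|x| <= 1]].

(* operator norm of V^{-1} : L^2_mu -> H, i.e. sup { |V^{-1} g| : |g|_2 <= 1 },
   where V^{-1} g is the (unique) x with V x = g a.e. *)
Definition opnormVinv d (T : measurableType d) (R : realType)
  (mu : {measure set T -> \bar R}) (H : normedModType R) (V : H -> T -> R) : R :=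
  sup [set `|x| | x in [set x : H | L2norm mu (V x) <= 1]].

(* essential supremum of f, as a real number (ess sup of an L^oo function
   is finite unless mu = 0, in which case fine gives 0) *)
Definition esssupR d (T : measurableType d) (R : realType)
  (mu : {measure set T -> \bar R}) (f : T -> R) : R :=
  fine (ess_sup mu (EFin \o f)).

Definition lambda_tilde d (T : measurableType d) (R : realType)
  (mu : {measure set T -> \bar R}) (H : normedModType R) (V : H -> T -> R)
  (f : T -> R) : R :=
  let cV := if 0 <= esssupR mu f then opnormV mu V ^+ 2
            else (opnormVinv mu V ^+ 2)^-1 in
  - esssupR mu f * cV.

Definition Ffun d (T : measurableType d) (R : realType)
  (mu : {measure set T -> \bar R}) (H : normedModType R) (V : H -> T -> R)
  (f : T -> R) (x : H) : R :=
  - 2^-1 * fine (\int[mu]_t (V x t * (f t * V x t))%:E)%E.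

Definition lambda_convex (R : realType) (H : normedModType R) (F : H -> R)
  (lam : R) : Prop :=
  forall (x1 x2 : H) (th : R), 0 <= th <= 1 ->
    F ((1 - th) *: x1 + th *: x2) <=
      (1 - th) * F x1 + th * F x2 - lam * (th * (1 - th) / 2) * `|x1 - x2| ^+ 2.

(* Main.v *)
Require Import Defs.
From HB Require Import structures.
From mathcomp Require Import all_boot all_order all_algebra.
From mathcomp Require Import all_classical all_reals all_analysis.
From mathcomp Require Import ess_sup_inf hoelder measurable_realfun.
From mathcomp Require Import ring lra.
Import Order.TTheory GRing.Theory Num.Theory.
Import numFieldNormedType.Exports.
Local Open Scope classical_set_scope.
Local Open Scope ring_scope.

Section helpers.
Context {R : realType} {d : measure_display} {T : measurableType d} {mu : {measure set T -> \bar R}}.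

Lemma L2_meas {h : T -> R} : h \in Lfun mu 2%:E -> measurable_fun setT h.
Proof. by move=> /[!inE] /andP[/[!inE]/= mh _]. Qed.

Lemma L2_sq (h : T -> R) : h \in Lfun mu 2%:E ->
  L2norm mu h ^+ 2 = \int[mu]_t (h t ^+ 2).
Proof.
move=> /[dup] hL /[!inE] /andP[_]; rewrite inE /= /finite_norm => fin.
have N0 := Lnorm_ge0 mu 2%:E (EFin \o h).
have nfin : ('N[mu]_2%:E[EFin \o h])%E \is a fin_num by rewrite ge0_fin_numE.
have two0 : (2:R) != 0 by rewrite pnatr_eq0.
have := powR_Lnorm mu (EFin \o h) two0.
rewrite -(fineK nfin).
rewrite poweR_EFin powR_mulrn ?fine_ge0 //.
under eq_integral => x _ do rewrite /comp abse_EFin poweR_EFin powR_mulrn // real_normK ?num_real //.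
by move=> e; rewrite /L2norm /Rintegral -e.
Qed.

Lemma L2_int_sq {h : T -> R} : h \in Lfun mu 2%:E ->
  mu.-integrable setT (EFin \o (fun t => h t ^+ 2)).
Proof. exact: Lfun2_integrable_sqr. Qed.

Lemma intZ (g : T -> R) k : mu.-integrable setT (EFin \o g) ->
  mu.-integrable setT (EFin \o (fun t => k * g t)).
Proof.
move=> ig; apply: (eq_integrable measurableT (fun t => (k%:E * (EFin \o g) t)%E)).
  by move=> t _; rewrite /= EFinM.
exact: integrableZl.
Qed.

Lemma intD (g1 g2 : T -> R) : mu.-integrable setT (EFin \o g1) ->
  mu.-integrable setT (EFin \o g2) ->
  mu.-integrable setT (EFin \o (fun t => g1 t + g2 t)).
Proof.
move=> i1 i2; apply: (eq_integrable measurableT ((EFin \o g1) \+ (EFin \o g2))%E).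
  by move=> t _.
exact: integrableD.
Qed.

Lemma intB (g1 g2 : T -> R) : mu.-integrable setT (EFin \o g1) ->
  mu.-integrable setT (EFin \o g2) ->
  mu.-integrable setT (EFin \o (fun t => g1 t - g2 t)).
Proof.
move=> i1 i2; apply: (eq_integrable measurableT ((EFin \o g1) \- (EFin \o g2))%E).
  by move=> t _.
exact: integrableB.
Qed.

Lemma Linf_bound (f : T -> R) : f \in Lfun mu +oo%E ->
  exists M, \forall t \ae mu, `|f t| <= M.
Proof.
move=> /[!inE] /andP[_]; rewrite inE /= /finite_norm unlock /Lnorm.
case: ifPn => mu0 fin.
  have e : (abse \o (EFin \o f)) = EFin \o (Num.norm \o f) by apply: funext.
  by move: fin; rewrite e => /ess_supr_bounded.
exists 0; exists setT; split => //.
apply/eqP; rewrite eq_le measure_ge0 andbT; by rewrite leNgt.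
Qed.

Lemma esssup_ae (f : T -> R) (M : R) : (\forall t \ae mu, `|f t| <= M) ->
  \forall t \ae mu, f t <= esssupR mu f.
Proof.
move=> hM; have := ess_sup_ge mu (EFin \o f).
rewrite /esssupR; case E: (ess_sup mu (EFin \o f)) => [r| |].
- by apply: filterS => t /=; rewrite lee_fin.
- have : (ess_sup mu (EFin \o f) <= M%:E)%E.
    apply/ess_supP; apply: filterS hM => t /= h.
    by rewrite lee_fin (le_trans (ler_norm _)).
  by rewrite E.
- move=> _; have /ess_sup_eqNyP := E.
  by apply: filterS.
Qed.

Lemma int_hfh {f h : T -> R} {M : R} : measurable_fun setT f -> h \in Lfun mu 2%:E ->
  (\forall t \ae mu, `|f t| <= M) ->
  mu.-integrable setT (EFin \o (fun t => h t * (f t * h t))).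
Proof.
move=> mf hL hM; have mh := L2_meas hL.
have mhfh : measurable_fun setT (fun t => h t * (f t * h t)).
  by apply: measurable_funM => //; apply: measurable_funM.
apply/integrableP; split; first exact/measurable_EFinP.
have /integrableP[_ fin] := intZ _ `|M| (L2_int_sq hL).
apply: le_lt_trans fin.
apply: ae_ge0_le_integral => //.
- apply: measurableT_comp => //; exact/measurable_EFinP.
- apply: measurableT_comp => //; apply/measurable_EFinP.
  by apply: measurable_funM => //; apply: measurable_funX.
- apply: filterS hM => t hft _ /=; rewrite lee_fin.
  rewrite (_ : `|h t * (f t * h t)| = `|f t| * `|h t| ^+ 2); last first.
    by rewrite !normrM; ring.
  rewrite normrM normr_id normrX.
  rewrite ler_wpM2r ?exprn_ge0 //.
  exact: (le_trans hft (ler_norm _)).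
Qed.

Lemma hfh_le (f h : T -> R) (s M : R) : measurable_fun setT f -> h \in Lfun mu 2%:E ->
  (\forall t \ae mu, `|f t| <= M) -> (\forall t \ae mu, f t <= s) ->
  \int[mu]_t (h t * (f t * h t)) <= s * \int[mu]_t (h t ^+ 2).
Proof.
move=> mf hL hM hs; have mh := L2_meas hL.
have ihfh := int_hfh mf hL hM.
rewrite -RintegralZl //; last exact: L2_int_sq.
rewrite -subr_ge0 -RintegralB //; last exact: intZ _ _ (L2_int_sq hL).
have mG : measurable_fun setT (fun t => s * h t ^+ 2 - h t * (f t * h t)).
  apply: measurable_funB.
    by apply: measurable_funM => //; apply: measurable_funX.
  by apply: measurable_funM => //; apply: measurable_funM.
rewrite /Rintegral; apply: fine_ge0.
rewrite (ae_eq_integral (fun t => (Num.max (s * h t ^+ 2 - h t * (f t * h t)) 0)%:E)) //.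
- by apply: integral_ge0 => t _; rewrite lee_fin le_max lexx orbT.
- exact/measurable_EFinP.
- apply/measurable_EFinP.
  exact: (measurable_maxr mG (measurable_cst (0:R))).
- apply: filterS hs => t fts _; congr EFin; rewrite max_l //.
  rewrite (_ : s * h t ^+ 2 - h t * (f t * h t) = (s - f t) * h t ^+ 2); last by ring.
  by rewrite mulr_ge0 ?sqr_ge0 // subr_ge0.
Qed.

End helpers.

Theorem mainTheorem3 (R : realType) (H : completeNormedModType R)
  (d : measure_display) (T : measurableType d) (mu : {measure set T -> \bar R})
  (f : T -> R) (V : H -> T -> R) :
  hilbert_space H ->
  separable_space H ->
  (* f in L^oo_mu, real-valued *)
  f \in Lfun mu +oo%E ->
  (* V : H -> L^2_mu linear (on representatives) *)
  (forall x, V x \in Lfun mu 2%:E) ->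
  (forall (a : R) (x y : H) (t : T), V (a *: x + y) t = a * V x t + V y t) ->
  (* V bounded *)
  (exists C : R, forall x, L2norm mu (V x) <= C * `|x|) ->
  (* V invertible with bounded inverse *)
  (forall x, V x = (fun=> 0) %[ae mu] -> x = 0) ->
  (forall g : T -> R, g \in Lfun mu 2%:E -> exists x, V x = g %[ae mu]) ->
  (exists c : R, forall x, `|x| <= c * L2norm mu (V x)) ->
  (* A = V^{-1} M_f V surjective: every y equals V^{-1}(f * V x) for some x *)
  (forall y : H, exists x : H, V y = (fun t => f t * V x t) %[ae mu]) ->
  lambda_convex (Ffun mu V f) (lambda_tilde mu V f).
Proof.
move=> _ _ fL VL Vlin [C hC] _ _ [c hc] _.
have mf : measurable_fun setT f by move: fL => /[!inE] /andP[/[!inE]/= ? _].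
have [M hM] := Linf_bound _ fL.
set s := esssupR mu f.
have hs : \forall t \ae mu, f t <= s by exact: esssup_ae _ _ hM.
have V0 : forall t, V 0 t = 0.
  move=> t; have := Vlin 1 0 0 t; rewrite scale1r addr0 mul1r => e; lra.
have VZ : forall a x t, V (a *: x) t = a * V x t.
  by move=> a x t; have := Vlin a x 0 t; rewrite addr0 V0 addr0.
have VB : forall x y t, V (x - y) t = V x t - V y t.
  move=> x y t; have -> : x - y = (-1) *: y + x by rewrite scaleN1r addrC.
  by rewrite Vlin; ring.
have L2ge0 : forall x, 0 <= L2norm mu (V x).
  by move=> x; rewrite /L2norm fine_ge0 // Lnorm_ge0.
have L2Z : forall a x, L2norm mu (V (a *: x)) = `|a| * L2norm mu (V x).
  move=> a x.
  have e : L2norm mu (V (a *: x)) ^+ 2 = (`|a| * L2norm mu (V x)) ^+ 2.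
    rewrite L2_sq // exprMn L2_sq // real_normK ?num_real //.
    rewrite -RintegralZl //; last exact: L2_int_sq.
    by apply: eq_Rintegral => t _; rewrite VZ; ring.
  by apply/eqP; rewrite -(eqrXn2 (n:=2)) ?e ?mulr_ge0.
have L2V0 : L2norm mu (V 0) = 0.
  by rewrite -(scale0r (0:H)) L2Z normr0 mul0r.
set nV := opnormV mu V.
have ubV : has_ubound [set L2norm mu (V x) | x in [set x : H | `|x| <= 1]].
  exists `|C| => _ [x /= hx <-].
  apply: (le_trans (hC x)).
  have := ler_norm C; have := normr_ge0 x; have := normr_ge0 C; nra.
have nV0 : 0 <= nV.
  by rewrite -L2V0; apply: ub_le_sup ubV _ _; exists 0 => //=; rewrite normr0.
have boundV : forall z, L2norm mu (V z) <= nV * `|z|.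
  move=> z; have [->|z0] := eqVneq z 0; first by rewrite L2V0 normr0 mulr0.
  have nz : 0 < `|z| by rewrite normr_gt0.
  have hu : L2norm mu (V (`|z|^-1 *: z)) <= nV.
    apply: ub_le_sup ubV _ _; exists (`|z|^-1 *: z) => //=.
    by rewrite normrZ normfV normr_id mulVf ?gt_eqF.
  move: hu; rewrite L2Z normfV normr_id => hu.
  have -> : L2norm mu (V z) = `|z| * (`|z|^-1 * L2norm mu (V z)).
    by rewrite mulrA mulfV ?gt_eqF // mul1r.
  by rewrite mulrC ler_wpM2r // ltW.
set W := opnormVinv mu V.
have ubW : has_ubound [set `|x| | x in [set x : H | L2norm mu (V x) <= 1]].
  exists `|c| => _ [x /= hx <-].
  apply: (le_trans (hc x)).
  have := ler_norm c; have := L2ge0 x; have := normr_ge0 c; nra.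
have W0 : 0 <= W.
  have e0 : `|0:H| = 0 := normr0 _.
  by rewrite -e0; apply: ub_le_sup ubW _ _; exists 0 => //=; rewrite L2V0 ler01.
have boundW : forall z, `|z| <= W * L2norm mu (V z).
  move=> z; set m := L2norm mu (V z).
  have [m0|m0] := eqVneq m 0.
    by have := hc z; rewrite -/m m0 !mulr0.
  have mp : 0 < m by rewrite lt0r m0 L2ge0.
  have hu : `|m^-1 *: z| <= W.
    apply: ub_le_sup ubW _ _; exists (m^-1 *: z) => //=.
    by rewrite L2Z normfV ger0_norm ?L2ge0 // mulVf.
  move: hu; rewrite normrZ normfV ger0_norm ?L2ge0 // => hu.
  have -> : `|z| = m * (m^-1 * `|z|) by rewrite mulrA mulfV // mul1r.
  by rewrite mulrC ler_wpM2r // ltW.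
set P := fun x => \int[mu]_t (V x t * (f t * V x t)).
have hP : forall x, Ffun mu V f x = - 2^-1 * P x by [].
have iP : forall x, mu.-integrable setT (EFin \o (fun t => V x t * (f t * V x t))).
  by move=> x; exact: int_hfh mf (VL x) hM.
set cV := if 0 <= s then nV ^+ 2 else (W ^+ 2)^-1.
have key : forall z, P z <= s * cV * `|z| ^+ 2.
  move=> z; have := hfh_le _ _ _ _ mf (VL z) hM hs; rewrite -L2_sq // => hle.
  apply: (le_trans hle); rewrite /cV; case: ifPn => hs0.
    rewrite -mulrA ler_wpM2l //.
    have := boundV z; have := L2ge0 z; have := normr_ge0 z; nra.
  rewrite -ltNge in hs0.
  have [W00|Wp] := eqVneq W 0.
    rewrite W00 expr0n /= invr0 mulr0 mul0r.
    by rewrite nmulr_rle0 // exprn_ge0.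
  have Wp' : 0 < W by rewrite lt0r Wp W0.
  rewrite -mulrA ler_nM2l //.
  rewrite ler_pdivrMl ?exprn_gt0 //.
  have := boundW z; have := L2ge0 z; have := normr_ge0 z; nra.
move=> x1 x2 th /andP[th0 th1].
rewrite !hP /lambda_tilde /= -/s -/cV.
have Pc : P ((1 - th) *: x1 + th *: x2) =
    (1 - th) * P x1 + th * P x2 - th * (1 - th) * P (x1 - x2).
  rewrite /P.
  transitivity (\int[mu]_t (((1 - th) * (V x1 t * (f t * V x1 t))
       + th * (V x2 t * (f t * V x2 t)))
       - th * (1 - th) * (V (x1 - x2) t * (f t * V (x1 - x2) t)))).
    by apply: eq_Rintegral => t _; rewrite Vlin !VZ VB; ring.
  rewrite RintegralB //; last 2 first.
  - by apply: intD; apply: intZ.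
  - exact: intZ.
  rewrite RintegralD //; try exact: intZ.
  by rewrite !RintegralZl.
rewrite Pc.
have := key (x1 - x2).
have w0 : 0 <= th * (1 - th) by rewrite mulr_ge0 // subr_ge0.
nra.
Qed.
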